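(* Let $Q(x_1,\ldots,x_q)$ be a polynomial with integer coefficients. For each $i\in\{1,\ldots,q\}$ let $d_i$ be an upper bound on the degree of $x_i$ in $Q$, let $k_i=\lceil\log(d_i+1)\rceil$, and let $K=\sum_{i=1}^q k_i$. Let $p_{1,1},\ldots,p_{1,k_1},\ldots,p_{q,1},\ldots,p_{q,k_q}$ be $K$ distinct primes, and for each $p_{i,j}$ let $b_{i,j}\in\{0,1\}$ be a bit. For each $i$ let $\pi_i=\sum_{j=1}^{k_i}(-1)^{b_{i,j}}\sqrt{p_{i,j}}$. Then $Q(x_1,\ldots,x_q)\not\equiv 0$ (as a polynomial) if and only if $Q(\pi_1,\ldots,\pi_q)\neq 0$.
   Context: All logarithms $\log$ are to base 2. *)

(* Defs.v *)
From HB Require Import structures.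
From mathcomp Require Import all_boot all_order all_algebra.
From mathcomp Require Import mpoly.
Set Implicit Arguments. Unset Strict Implicit. Unset Printing Implicit Defensive.
Import Order.TTheory GRing.Theory Num.Theory.
Local Open Scope ring_scope.

Definition deg_bounded (q : nat) (Q : {mpoly int[q]}) (d : 'I_q -> nat) : Prop :=
  forall m, m \in msupp Q -> forall i : 'I_q, (m i <= d i)%N.

(* k = ceil(log2(d+1)) = least e with d+1 <= 2^e *)
Definition klog (d : nat) : nat := up_log 2 d.+1.

Definition pi_val (R : rcfType) (k : nat) (p : 'I_k -> nat) (b : 'I_k -> bool) : R :=
  \sum_(j < k) (-1) ^+ (b j) * Num.sqrt ((p j)%:R).

(* Main.v *)
Require Import Defs.
From HB Require Import structures.
From mathcomp Require Import all_boot all_order all_algebra.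
From mathcomp Require Import mpoly.
From mathcomp Require Import zify ring lra.
Import Order.TTheory GRing.Theory Num.Theory.
Local Open Scope ring_scope.

Section NT.
Variable R : rcfType.

Lemma nt_contra (p : nat) (Ms : seq nat) (t : rat) : prime p -> all prime Ms -> p \notin Ms ->
  (p%:R : R) = ratr t ^+ 2 * (\prod_(y <- Ms) y)%N%:R -> False.
Proof.
move=> pp aM npM.
have pM : ~~ (p %| \prod_(y <- Ms) y)%N.
  elim: Ms aM npM => [|y Ms IH] /=.
    by move=> _ _; rewrite big_nil dvdn1; apply/eqP=> p1; rewrite p1 in pp.
  case/andP=> py aM; rewrite inE negb_or => /andP[pny npM].
  by rewrite big_cons Euclid_dvdM // dvdn_prime2 // (negbTE pny) /= IH.
have M0 : (0 < \prod_(y <- Ms) y)%N.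
  elim: Ms aM {npM pM} => [|y Ms IH] /=; first by rewrite big_nil.
  by case/andP=> py aM; rewrite big_cons muln_gt0 prime_gt0 // IH.
have d0 : ((denq t)%:~R : R) != 0 by rewrite intr_eq0 denq_neq0.
set M := (\prod_(y <- Ms) y)%N in M0 pM *.
rewrite /ratr expr_div_n => E.
have E2 : ((p%:Z * denq t ^+ 2)%:~R : R) = ((numq t ^+ 2 * M%:Z)%:~R).
  rewrite !intrM -!pmulrn E.
  by field.
move/intr_inj/(congr1 absz): E2; rewrite !abszM /= => E3.
have D0 : (0 < `|denq t|)%N by rewrite absz_gt0 denq_neq0.
have N0 : (0 < `|numq t|)%N.
  rewrite lt0n; apply/eqP=> N0; rewrite N0 /= in E3.
  have : (0 < p * `|denq t| ^ 2)%N by rewrite !muln_gt0 prime_gt0 // D0.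
  by rewrite E3.
have := congr1 (logn p) E3.
rewrite !lognM ?muln_gt0 ?(prime_gt0 pp) ?D0 ?N0 //. have lp : logn p p = 1%N by rewrite logn_prime // eqxx.
have -> : logn p M = 0%N.
  by apply/eqP; rewrite -leqn0 leqNgt logn_gt0 mem_primes pp M0 (negbTE pM).
lia.
Qed.

Definition sq (p : nat) : R := Num.sqrt (p%:R).

Lemma sq_sqr p : sq p ^+ 2 = p%:R.
Proof. by rewrite sqr_sqrtr // ler0n. Qed.

Fixpoint Ft (ps : seq nat) (x : R) : Prop :=
  if ps is p :: ps' then exists a b, Ft ps' a /\ Ft ps' b /\ x = a + b * sq p
  else exists r : rat, x = ratr r.

Lemma Ft_rat ps r : Ft ps (ratr r).
Proof.
elim: ps r => [|p ps IH] r /=; first by exists r.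
exists (ratr r), (ratr 0); rewrite rmorph0 mul0r addr0; do !split => //.
by have := IH 0; rewrite rmorph0.
Qed.

Lemma Ft_nat ps (n : nat) : Ft ps n%:R.
Proof. by rewrite -(ratr_nat R n); apply: Ft_rat. Qed.

Lemma Ft_int ps (n : int) : Ft ps n%:~R.
Proof. by rewrite -(ratr_int R n); apply: Ft_rat. Qed.

Lemma Ft0 ps : Ft ps 0.
Proof. by have := Ft_nat ps 0. Qed.

Lemma Ft1 ps : Ft ps 1.
Proof. by have := Ft_nat ps 1. Qed.

Lemma FtD ps x y : Ft ps x -> Ft ps y -> Ft ps (x + y).
Proof.
elim: ps x y => [|p ps IH] x y /=.
  by move=> [r ->] [r' ->]; exists (r + r'); rewrite rmorphD.
move=> [a [b [Ha [Hb ->]]]] [a' [b' [Ha' [Hb' ->]]]].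
exists (a + a'), (b + b'); do !split; try exact: (IH).
by rewrite mulrDl; ring.
Qed.

Lemma FtN ps x : Ft ps x -> Ft ps (- x).
Proof.
elim: ps x => [|p ps IH] x /=.
  by move=> [r ->]; exists (- r); rewrite rmorphN.
move=> [a [b [Ha [Hb ->]]]].
exists (- a), (- b); do !split; try exact: (IH).
by ring.
Qed.

Lemma FtB ps x y : Ft ps x -> Ft ps y -> Ft ps (x - y).
Proof. by move=> Hx Hy; apply: FtD => //; apply: FtN. Qed.

Lemma FtM ps x y : Ft ps x -> Ft ps y -> Ft ps (x * y).
Proof.
elim: ps x y => [|p ps IH] x y /=.
  by move=> [r ->] [r' ->]; exists (r * r'); rewrite rmorphM.
move=> [a [b [Ha [Hb ->]]]] [a' [b' [Ha' [Hb' ->]]]].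
exists (a * a' + b * b' * p%:R), (a * b' + b * a'); do !split.
- apply: FtD; first exact: (IH).
  by apply: (IH); [apply: (IH) | apply: Ft_nat].
- by apply: FtD; apply: (IH).
- have := sq_sqr p; move=> E; rewrite -E; ring.
Qed.

Lemma FtX ps x n : Ft ps x -> Ft ps (x ^+ n).
Proof.
move=> Hx; elim: n => [|n IH]; first by rewrite expr0; apply: Ft1.
by rewrite exprS; apply: FtM.
Qed.

Lemma Ft_cons ps p x : Ft ps x -> Ft (p :: ps) x.
Proof. by move=> Hx /=; exists x, 0; rewrite mul0r addr0; split => //; split => //; apply: Ft0. Qed.

Lemma Ft_sq ps p : p \in ps -> Ft ps (sq p).
Proof.
elim: ps => [|y ps IH] //=; rewrite inE => /orP[/eqP ->|pin].
  by exists 0, 1; rewrite mul1r add0r; do !split => //; [apply: Ft0|apply: Ft1].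
by apply: Ft_cons; apply: (IH).
Qed.

Lemma Ft_cons_in ps p x : p \in ps -> Ft (p :: ps) x -> Ft ps x.
Proof.
move=> pin [a [b [Ha [Hb ->]]]].
by apply: FtD => //; apply: FtM => //; apply: Ft_sq.
Qed.

Lemma Ft_sum ps (I : Type) (r : seq I) (P : pred I) (F : I -> R) :
  (forall i, P i -> Ft ps (F i)) -> Ft ps (\sum_(i <- r | P i) F i).
Proof.
move=> H; apply: (big_ind (Ft ps)) => //; [exact: Ft0 | exact: FtD].
Qed.

Definition Cprop (ps : seq nat) := forall c r, Ft ps c -> c ^+ 2 = ratr r ->
  exists t Ms, all (mem ps) Ms /\ c = ratr t * \prod_(y <- Ms) sq y.

Lemma nosq ps p c : all prime ps -> prime p -> p \notin ps -> Cprop ps ->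
  Ft ps c -> c ^+ 2 = p%:R -> False.
Proof.
move=> aps pp pnin HC Hc E.
have [t [Ms [HM Ec]]] : exists t Ms, all (mem ps) Ms /\ c = ratr t * \prod_(y <- Ms) sq y.
  by apply: (HC c p%:R) => //; rewrite ratr_nat.
apply: (@nt_contra p Ms t pp).
- by apply/allP => y /(allP HM) yin; exact: (allP aps y yin).
- by apply/negP => /(allP HM) pin; case/negP: pnin.
rewrite -E Ec exprMn -prodrXl natr_prod; congr (_ * _).
by apply: eq_bigr => y _; rewrite sq_sqr.
Qed.

Lemma tower ps : all prime ps ->
  (forall x, Ft ps x -> x != 0 -> Ft ps x^-1) /\ Cprop ps.
Proof.
elim: ps => [|p ps IH] /=.
  move=> _; split.
    by move=> x [r ->] _; exists r^-1; rewrite fmorphV.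
  move=> c r [t ->] _; exists t, [::]; split => //.
  by rewrite big_nil mulr1.
case/andP=> pp aps; have [HI HC] := IH aps.
have sub : forall Ms, all (mem ps) Ms -> all (mem (p :: ps)) Ms.
  by move=> Ms; apply: sub_all => y /= yin; rewrite inE yin orbT.
case: (boolP (p \in ps)) => pin.
  split.
    by move=> x Hx nx; apply: Ft_cons; apply: HI => //; apply: Ft_cons_in Hx.
  move=> c r Hc E; have Hc2 : Ft ps c by apply: Ft_cons_in Hc.
  have [t [Ms [HM ->]]] := HC c r Hc2 E.
  by exists t, Ms; split => //; apply: sub.
have s2 := sq_sqr p.
split.
  move=> x [a [b [Ha [Hb ->]]]] nx.
  set N := a ^+ 2 - b ^+ 2 * p%:R.
  have FN : Ft ps N.
    by apply: FtB; [apply: FtX | apply: FtM; [apply: FtX|apply: Ft_nat]].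
  case: (eqVneq N 0) => N0.
    case: (eqVneq b 0) => b0.
      move: N0 nx; rewrite /N b0 expr0n /= mul0r subr0 mul0r addr0 => /eqP.
      by rewrite expf_eq0 /= => ->.
    exfalso; apply: (@nosq ps p (a / b)) => //.
      by apply: FtM => //; apply: HI.
    move/eqP: N0; rewrite subr_eq0 => /eqP N0.
    by rewrite expr_div_n N0; field.
  exists (a / N), (- (b / N)); do !split.
  - by apply: FtM => //; apply: HI.
  - by apply: FtN; apply: FtM => //; apply: HI.
  apply: (mulfI nx); rewrite mulfV //.
  have -> : (a + b * sq p) * (a / N + - (b / N) * sq p) = (a ^+ 2 - b ^+ 2 * sq p ^+ 2) / N.
    by ring.
  by rewrite s2 -/N mulfV.
move=> c r [a [b [Ha [Hb ->]]]] E.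
have E2 : a ^+ 2 + b ^+ 2 * p%:R + 2 * a * b * sq p = ratr r.
  by rewrite -E -s2; ring.
case: (eqVneq (a * b) 0) => ab0; last first.
  exfalso; apply: (@nosq ps p (sq p)) => //.
  have -> : sq p = (ratr r - a ^+ 2 - b ^+ 2 * p%:R) / (2 * a * b).
    by rewrite -E2; field; move: ab0; rewrite mulf_eq0 negb_or andbC.
  apply: FtM; first by apply: FtB; [apply: FtB; [apply: Ft_rat | apply: FtX]
     | apply: FtM; [apply: FtX | apply: Ft_nat]].
  apply: HI; last by rewrite -mulrA mulf_neq0 // pnatr_eq0.
  by apply: FtM; [apply: FtM; [apply: Ft_nat|] |].
move/eqP: ab0; rewrite mulf_eq0 => /orP[/eqP a0|/eqP b0].
  have Eb : b ^+ 2 = ratr (r / p%:R).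
    rewrite fmorph_div rmorph_nat /= -E2 a0; field.
    by rewrite pnatr_eq0; apply/eqP => p0; rewrite p0 in pp.
  have [t [Ms [HM ->]]] := HC b _ Hb Eb.
  exists t, (p :: Ms); split; first by rewrite /= inE eqxx /=; apply: sub.
  by rewrite a0 add0r big_cons; ring.
have Ea2 : a ^+ 2 = ratr r by rewrite -E2 b0; ring.
have [t [Ms [HM Ea]]] := HC a r Ha Ea2.
exists t, Ms; split; first by apply: sub.
by rewrite b0 mul0r addr0.
Qed.

Lemma notin_sq ps p : all prime ps -> prime p -> p \notin ps -> ~ Ft ps (sq p).
Proof.
move=> aps pp pnin H; have [_ HC] := tower ps aps.
exact: (@nosq ps p (sq p) aps pp pnin HC H (sq_sqr p)).
Qed.

Lemma Ft_inv ps x : all prime ps -> Ft ps x -> x != 0 -> Ft ps x^-1.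
Proof. by move=> aps; have [HI _] := tower ps aps; apply: HI. Qed.

Lemma conj_poly ps s (f : {poly R}) : Ft ps (s ^+ 2) -> (forall n, Ft ps f`_n) ->
  exists A B, Ft ps A /\ Ft ps B /\ f.[s] = A + s * B /\ f.[- s] = A - s * B.
Proof.
move=> Hs; elim/poly_ind: f => [|g c IH] Hf.
  by exists 0, 0; rewrite !horner0 mulr0 addr0 subr0; do !split; apply: Ft0.
have Hg : forall n, Ft ps g`_n.
  by move=> n; have := Hf n.+1; rewrite coefD coefMX coefC /= addr0.
have Hc : Ft ps c by have := Hf 0%N; rewrite coefD coefMX coefC /= add0r.
have [A [B [HA [HB [E1 E2]]]]] := IH Hg.
exists (c + s ^+ 2 * B), A; do !split => //.
- by apply: FtD => //; apply: FtM.
- by rewrite hornerMXaddC E1; ring.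
- by rewrite hornerMXaddC E2; ring.
Qed.

Lemma flip_root ps s (f : {poly R}) : all prime ps -> Ft ps (s ^+ 2) -> ~ Ft ps s ->
  (forall n, Ft ps f`_n) -> f.[s] = 0 -> f.[- s] = 0.
Proof.
move=> aps Hs ns Hf.
have [A [B [HA [HB [E1 E2]]]]] := conj_poly ps s f Hs Hf.
rewrite E1 E2 => E.
case: (eqVneq B 0) => B0.
  by move: E; rewrite B0 mulr0 !addr0 subr0.
exfalso; apply: ns.
have -> : s = - A / B.
  have EA : A = - (s * B) by apply/eqP; rewrite -addr_eq0 E.
  by rewrite EA opprK mulfK.
by apply: FtM; [apply: FtN | apply: Ft_inv].
Qed.
End NT.

Section EvQ.
Variable q : nat.
Variable Q : {mpoly int[q]}.

Definition evQ (S : comNzRingType) (v : 'I_q -> S) : S :=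
  \sum_(m <- msupp Q) (Q@_m)%:~R * \prod_(i < q) v i ^+ m i.
Arguments evQ {S} v.

Lemma evQ_meval (S : comNzRingType) (v : 'I_q -> S) :
  (map_mpoly (fun z : int => z%:~R : S) Q).@[v] = evQ v.
Proof.
rewrite /map_mpoly /mmap raddf_sum.
apply: eq_bigr => m _ /=; rewrite mevalM mevalC /mmap1.
rewrite rmorph_prod; congr (_ * _).
by apply: eq_bigr => i _; rewrite rmorphXn /= mevalXU.
Qed.

Lemma evQ_eq (S : comNzRingType) (v w : 'I_q -> S) : v =1 w -> evQ v = evQ w.
Proof.
move=> E; apply: eq_bigr => m _; congr (_ * _); apply: eq_bigr => i _.
by rewrite E.
Qed.

Lemma evQ_morph (S T : comNzRingType) (phi : {rmorphism S -> T}) (v : 'I_q -> S) :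
  phi (evQ v) = evQ (fun i => phi (v i)).
Proof.
rewrite rmorph_sum; apply: eq_bigr => m _.
rewrite rmorphM rmorph_int rmorph_prod; congr (_ * _).
by apply: eq_bigr => i _; rewrite rmorphXn.
Qed.

Lemma evQ_X (R : numDomainType) :
  map_mpoly (fun z : int => z%:~R : R) Q = evQ (fun i => 'X_i).
Proof.
rewrite /map_mpoly /mmap; apply: eq_bigr => m _ /=.
by rewrite rmorph_int.
Qed.

End EvQ.
Arguments evQ {q} Q {S} v.


Lemma size_le1M (T : comNzRingType) (a b : {poly T}) :
  (size a <= 1)%N -> (size b <= 1)%N -> (size (a * b)%R <= 1)%N.
Proof.
move=> ha hb; apply: leq_trans (size_polyMleq a b) _; lia.
Qed.

Lemma size_evQ (T : comNzRingType) q (Q : {mpoly int[q]}) d (w : 'I_q -> {poly T}) i0 :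
  deg_bounded Q d -> w i0 = 'X -> (forall i, i != i0 -> (size (w i) <= 1)%N) ->
  (size (evQ Q w) <= (d i0).+1)%N.
Proof.
move=> hd hw hs; rewrite /evQ big_seq.
apply: (big_ind (fun p : {poly T} => (size p <= (d i0).+1)%N)).
- by rewrite size_poly0.
- move=> x y hx hy; apply: leq_trans (size_polyD x y) _; by rewrite geq_max hx hy.
move=> m hm.
have hc : (size ((Q@_m)%:~R : {poly T}) <= 1)%N.
  have -> : ((Q@_m)%:~R : {poly T}) = ((Q@_m)%:~R)%:P by rewrite rmorph_int.
  by rewrite size_polyC leq_b1.
apply: leq_trans (size_polyMleq _ _) _.
rewrite (bigD1 i0) //= hw.
have hp : (size (\prod_(i < q | i != i0) w i ^+ m i)%R <= 1)%N.
  apply: (big_ind (fun p : {poly T} => (size p <= 1)%N)).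
  - by rewrite size_poly1.
  - by move=> x y; apply: size_le1M.
  move=> i hi; elim: (m i) => [|k IH]; first by rewrite expr0 size_poly1.
  by rewrite exprS; apply: size_le1M => //; apply: hs.
have hX := size_polyMleq ('X ^+ m i0) (\prod_(i < q | i != i0) w i ^+ m i)%R.
rewrite size_polyXn in hX.
have := hd m hm i0.
move: hc hp hX.
set a := size _; set b := size _; set c := size _.
lia.
Qed.

Lemma evQ_horner (T : comNzRingType) q (Q : {mpoly int[q]}) (w : 'I_q -> {poly T}) (x : T) :
  (evQ Q w).[x] = evQ Q (fun i => (w i).[x]).
Proof. exact: (@evQ_morph q Q _ _ (horner_eval x) w). Qed.

Lemma grid (R : rcfType) q (Q : {mpoly int[q]}) d (S : 'I_q -> seq R) :
  deg_bounded Q d -> (forall i, uniq (S i)) -> (forall i, d i < size (S i))%N ->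
  (forall x : 'I_q -> R, (forall i, x i \in S i) -> evQ Q x = 0) -> Q = 0.
Proof.
move=> hd hu hsz hz.
have P : forall n, (n <= q)%N -> forall x : 'I_q -> R,
    (forall i : 'I_q, (n <= i)%N -> x i \in S i) ->
    evQ Q (fun i : 'I_q => if (i < n)%N then 'X_i else (x i)%:MP : {mpoly R[q]}) = 0.
  elim => [|n IH] nq x hx.
    rewrite (_ : evQ Q _ = evQ Q (fun i => @mpolyC q R (x i))); last by apply: evQ_eq.
    by rewrite -evQ_morph hz ?rmorph0 // => i; apply: hx.
  pose i0 : 'I_q := Ordinal nq.
  pose w : 'I_q -> {poly {mpoly R[q]}} := fun i =>
    if (i < n)%N then ('X_i)%:P else if i == i0 then 'X else ((x i)%:MP)%:P.
  have f0 : evQ Q w = 0.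
    apply/eqP; apply: contraT => nz.
    have hsize : (size (evQ Q w) <= (d i0).+1)%N.
      apply: size_evQ => //; first by rewrite /w ltnn eqxx.
      move=> i ni; rewrite /w; case: ifP => _; first by rewrite size_polyC leq_b1.
      by rewrite (negbTE ni) size_polyC leq_b1.
    have hroots : all (root (evQ Q w)) (map (@mpolyC q R) (S i0)).
      apply/allP => y /mapP [t ht ->]; apply/eqP.
      rewrite evQ_horner.
      pose x' : 'I_q -> R := fun i => if i == i0 then t else x i.
      rewrite (_ : evQ Q _ = evQ Q (fun i : 'I_q => if (i < n)%N then 'X_i else (x' i)%:MP)).
        apply: IH; first exact: ltnW.
        move=> i; rewrite /x'; case: eqP => [-> _ //|ne ni]; apply: hx.
        by rewrite ltn_neqAle ni andbT; apply/eqP => ein; apply: ne; apply: val_inj.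
      apply: evQ_eq => i; rewrite /w /x'.
      case: ifP => hi; first by rewrite hornerC.
      case: eqP => _; first by rewrite hornerX.
      by rewrite hornerC.
    have := max_poly_roots nz hroots.
    rewrite map_inj_uniq ?hu; last exact: (can_inj (@mpolyCK q R)).
    move=> /(_ isT); rewrite size_map => hlt.
    by have := leq_trans hlt hsize; rewrite ltnS leqNgt hsz.
  move: f0 => /(congr1 (fun f => f.[('X_i0 : {mpoly R[q]})])) /=; rewrite horner0 evQ_horner.
  move=> <-; apply: evQ_eq => i; apply/esym; rewrite /w.
  case: ifP => hi; first by rewrite hornerC ltnS ltnW.
  case: eqP => [->|ne]; first by rewrite hornerX ltnSn.
  rewrite hornerC ltnS leq_eqVlt hi orbF.
  case: eqP => // ein; exfalso; apply: ne; exact: val_inj.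
have := P q (leqnn q) (fun _ => 0).
rewrite (_ : evQ Q _ = evQ Q (fun i => 'X_i)); last by apply: evQ_eq => i; rewrite ltn_ord.
rewrite -evQ_X => /(_ _)/=.
move=> H; have {}H : map_mpoly (fun z : int => z%:~R : R) Q = 0.
  by apply: H => i; rewrite leqNgt ltn_ord.
apply/mpolyP => m; rewrite mcoeff0.
have := congr1 (mcoeff m) H.
rewrite (mcoeff_map_mpoly (intmul (1 : R))) mcoeff0 => /eqP.
by rewrite intr_eq0 => /eqP.
Qed.

Section Main.
Variable R : rcfType.
Variable q : nat.
Variable Q : {mpoly int[q]}.
Variable d : 'I_q -> nat.
Variable p : forall i : 'I_q, 'I_(klog (d i)) -> nat.
Hypothesis hpr : forall i j, prime (p i j).
Hypothesis hinj : forall i j i' j', p i j = p i' j' -> i = i' /\ (j : nat) = (j' : nat).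

Definition ss i j : R := sq R (p i j).

Definition gi i (f : 'I_(klog (d i)) -> bool) : R :=
  \sum_(j < klog (d i)) (-1) ^+ (f j) * ss i j.

Definition Val (e : forall i : 'I_q, 'I_(klog (d i)) -> bool) : R :=
  evQ Q (fun i => gi i (e i)).

Definition others (i0 : 'I_q) (j0 : nat) : seq nat :=
  flatten [seq [seq p i j | j <- enum 'I_(klog (d i)) & ~~ ((i == i0) && (val j == j0))]
          | i <- enum 'I_q].

Lemma mem_others i0 j0 i j : ~~ ((i == i0) && (val j == j0)) -> p i j \in others i0 j0.
Proof.
move=> h; apply/flattenP.
exists [seq p i j | j <- enum 'I_(klog (d i)) & ~~ ((i == i0) && (val j == j0))].
  by apply/mapP; exists i; rewrite ?mem_enum.
by apply/mapP; exists j; rewrite // mem_filter h mem_enum.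
Qed.

Lemma others_mem i0 j0 x : x \in others i0 j0 ->
  exists i j, x = p i j /\ ~~ ((i == i0) && (val j == j0)).
Proof.
case/flattenP => s /mapP [i _ ->] /mapP [j].
by rewrite mem_filter => /andP[h _] ->; exists i, j.
Qed.

Lemma others_prime i0 j0 : all prime (others i0 j0).
Proof. by apply/allP => x /others_mem [i [j [-> _]]]. Qed.

Lemma others_notin i0 (j0 : 'I_(klog (d i0))) : p i0 j0 \notin others i0 j0.
Proof.
apply/negP => /others_mem [i [j [E h]]].
have [ei ej] := hinj _ _ _ _ (esym E).
have ej2 : (\val j == j0) = true by apply/eqP.
by move: h; rewrite ej2 andbT ei eqxx.
Qed.

Lemma E_ss i0 j0 i j : ~~ ((i == i0) && (val j == j0)) -> Ft R (others i0 j0) (ss i j).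
Proof. by move=> h; apply: Ft_sq; apply: mem_others. Qed.

Lemma notE_ss i0 (j0 : 'I_(klog (d i0))) : ~ Ft R (others i0 j0) (ss i0 j0).
Proof.
apply: notin_sq; [exact: others_prime | exact: hpr | exact: others_notin].
Qed.

Lemma Ft_sign ps (c : bool) : Ft R ps ((-1) ^+ c).
Proof. by apply: FtX; apply: FtN; apply: Ft1. Qed.

Lemma gi_inj i (f f' : 'I_(klog (d i)) -> bool) : gi i f = gi i f' -> forall j, f j = f' j.
Proof.
move=> E j0; apply/eqP; apply: contraT => ne; exfalso.
pose c j : R := (-1) ^+ (f j) - (-1) ^+ (f' j).
have cne : c j0 != 0.
  by rewrite /c; move: ne; case: (f j0); case: (f' j0) => //= _; rewrite ?expr1 ?expr0; lra.
have S0 : \sum_(j < klog (d i)) c j * ss i j = 0.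
  rewrite /c; under eq_bigr do rewrite mulrBl.
  by rewrite sumrB -/(gi i f) -/(gi i f') E subrr.
rewrite (bigD1 j0) //= in S0.
apply: (@notE_ss i j0).
have -> : ss i j0 = - (\sum_(j < klog (d i) | j != j0) c j * ss i j) / c j0.
  have EA : c j0 * ss i j0 = - (\sum_(j < klog (d i) | j != j0) c j * ss i j).
    by apply/eqP; rewrite -addr_eq0 S0.
  by rewrite -EA; field.
apply: FtM; last by apply: Ft_inv => //; [exact: others_prime | apply: FtB; apply: Ft_sign].
apply: FtN; apply: Ft_sum => j hj; apply: FtM; first by apply: FtB; apply: Ft_sign.
by apply: E_ss; rewrite eqxx /=.
Qed.

Definition flipe (e : forall i : 'I_q, 'I_(klog (d i)) -> bool) (i0 : 'I_q) (j0 : nat) :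
  forall i : 'I_q, 'I_(klog (d i)) -> bool :=
  fun i j => if (i == i0) && (val j == j0) then ~~ e i j else e i j.

Lemma gi_ext i f f' : f =1 f' -> gi i f = gi i f'.
Proof. by move=> E; apply: eq_bigr => j _; rewrite E. Qed.

Lemma Val_eq e e' : (forall i j, e i j = e' i j) -> Val e = Val e'.
Proof. by move=> E; apply: evQ_eq => i; apply: gi_ext => j; apply: E. Qed.

Definition PE ps (g : {poly R}) := forall n, Ft R ps g`_n.

Lemma PE_C ps c : Ft R ps c -> PE ps c%:P.
Proof. by move=> h n; rewrite coefC; case: eqP => _ //; apply: Ft0. Qed.

Lemma PE_X ps : PE ps 'X.
Proof. by move=> n; rewrite coefX; case: eqP => _; [apply: Ft1 | apply: Ft0]. Qed.

Lemma PE_D ps g h : PE ps g -> PE ps h -> PE ps (g + h).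
Proof. by move=> hg hh n; rewrite coefD; apply: FtD. Qed.

Lemma PE_M ps g h : PE ps g -> PE ps h -> PE ps (g * h).
Proof.
by move=> hg hh n; rewrite coefM; apply: Ft_sum => j _; apply: FtM.
Qed.

Lemma PE_Xn ps g k : PE ps g -> PE ps (g ^+ k).
Proof.
move=> hg; elim: k => [|k IH]; first by rewrite expr0; apply: PE_C; apply: Ft1.
by rewrite exprS; apply: PE_M.
Qed.

Lemma PE_evQ ps (w : 'I_q -> {poly R}) : (forall i, PE ps (w i)) -> PE ps (evQ Q w).
Proof.
move=> hw n; rewrite /evQ coef_sum; apply: Ft_sum => m _.
suff : PE ps ((Q@_m)%:~R * \prod_(i < q) w i ^+ m i) by apply.
apply: PE_M.
  by rewrite -(rmorph_int (@polyC R)); apply: PE_C; apply: Ft_int.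
apply: (big_ind (PE ps)).
- by apply: PE_C; apply: Ft1.
- by move=> x y; apply: PE_M.
by move=> i _; apply: PE_Xn.
Qed.

Lemma gi_split i0 (j0 : 'I_(klog (d i0))) f :
  gi i0 f = (-1) ^+ (f j0) * ss i0 j0 +
            \sum_(j < klog (d i0) | j != j0) (-1) ^+ (f j) * ss i0 j.
Proof. by rewrite /gi (bigD1 j0). Qed.

Lemma Ft_rest i0 (j0 : 'I_(klog (d i0))) f :
  Ft R (others i0 j0) (\sum_(j < klog (d i0) | j != j0) (-1) ^+ (f j) * ss i0 j).
Proof.
apply: Ft_sum => j hj; apply: FtM; first by apply: FtX; apply: FtN; apply: Ft1.
by apply: E_ss; rewrite eqxx /=.
Qed.

Lemma Ft_gi i0 (j0 : 'I_(klog (d i0))) i f : i != i0 -> Ft R (others i0 j0) (gi i f).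
Proof.
move=> ne; apply: Ft_sum => j _; apply: FtM; first by apply: FtX; apply: FtN; apply: Ft1.
by apply: E_ss; rewrite (negbTE ne).
Qed.

Lemma flip_val e i0 (j0 : 'I_(klog (d i0))) : Val e = 0 -> Val (flipe e i0 j0) = 0.
Proof.
move=> V0.
set c0 : R := (-1) ^+ (e i0 j0).
set s0 := ss i0 j0.
set rest := \sum_(j < klog (d i0) | j != j0) (-1) ^+ (e i0 j) * ss i0 j.
pose w : 'I_q -> {poly R} := fun i =>
  if i == i0 then rest%:P + c0%:P * 'X else (gi i (e i))%:P.
have Hs : (evQ Q w).[s0] = Val e.
  rewrite evQ_horner; apply: evQ_eq => i; rewrite /w.
  case: (eqVneq i i0) => [ei|ne]; last by rewrite hornerC.
  subst i; rewrite hornerD hornerC hornerCM (gi_split _ j0) addrC.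
  by rewrite hornerX.
have Hn : (evQ Q w).[- s0] = Val (flipe e i0 j0).
  rewrite evQ_horner; apply: evQ_eq => i; rewrite /w.
  case: (eqVneq i i0) => [ei|ne]; last first.
    rewrite hornerC; apply: gi_ext => j; by rewrite /flipe (negbTE ne).
  subst i; rewrite hornerD hornerC hornerCM hornerX (gi_split _ j0) addrC.
  rewrite /flipe !eqxx /=.
  congr (_ + _); last first.
    by apply: eq_bigr => j hj; rewrite val_eqE (negbTE hj).
  by rewrite /c0 /s0; case: (e i0 j0); rewrite /= ?expr1 ?expr0; ring.
rewrite -Hn; apply: (@flip_root R (others i0 j0)).
- exact: others_prime.
- by rewrite /s0 /ss sq_sqr; apply: Ft_nat.
- exact: notE_ss.
- apply: PE_evQ => i; rewrite /w; case: (eqVneq i i0) => [ei|ne].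
    apply: PE_D; first by apply: PE_C; apply: Ft_rest.
    by apply: PE_M; [apply: PE_C; apply: FtX; apply: FtN; apply: Ft1 | apply: PE_X].
  by apply: PE_C; apply: Ft_gi.
by rewrite Hs.
Qed.

Variable b : forall i : 'I_q, 'I_(klog (d i)) -> bool.

Definition dist (e : forall i : 'I_q, 'I_(klog (d i)) -> bool) : nat :=
  \sum_(i < q) #|[pred j : 'I_(klog (d i)) | e i j != b i j]|.

Lemma dist_flip e i0 (j0 : 'I_(klog (d i0))) : e i0 j0 != b i0 j0 ->
  dist e = (dist (flipe e i0 j0)).+1.
Proof.
move=> ne.
have E0 : #|[pred j : 'I_(klog (d i0)) | e i0 j != b i0 j]| =
          (#|[pred j : 'I_(klog (d i0)) | flipe e i0 j0 i0 j != b i0 j]|).+1.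
  rewrite (cardD1 j0) inE ne add1n; congr S; apply: eq_card => j.
  rewrite !inE /flipe eqxx /=.
  case: (eqVneq j j0) => [->|hj]; last by rewrite val_eqE (negbTE hj).
  by rewrite eqxx /=; move: ne; case: (e i0 j0); case: (b i0 j0).
rewrite /dist (bigD1 i0) //= [X in _ = X.+1](bigD1 i0) //= E0 addSn; congr (_ + _).+1.
apply: eq_bigr => i hi; apply: eq_card => j; rewrite !inE /flipe.
by rewrite (negbTE hi).
Qed.

Lemma all_signs : Val b = 0 -> forall e, Val e = 0.
Proof.
move=> Vb.
suff H : forall n e, dist e = n -> Val e = 0 by move=> e; apply: (H _ e erefl).
elim=> [|n IH] e De.
  rewrite (Val_eq e b) // => i j; apply/eqP; apply: contraT => ne.
  have : (0 < dist e)%N.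
    rewrite /dist (bigD1 i) //=.
    have : (0 < #|[pred j : 'I_(klog (d i)) | e i j != b i j]|)%N.
      by apply/card_gt0P; exists j; rewrite inE.
    lia.
  by rewrite De.
have [i0 [j0 ne]] : exists i0 (j0 : 'I_(klog (d i0))), e i0 j0 != b i0 j0.
  case: (boolP [exists i, [exists j : 'I_(klog (d i)), e i j != b i j]]).
    by case/existsP => i /existsP [j h]; exists i, j.
  rewrite negb_exists => /forallP H; exfalso.
  have : dist e = 0%N.
    rewrite /dist big1 // => i _; apply: eq_card0 => j; rewrite !inE.
    by have := H i; rewrite negb_exists => /forallP /(_ j); rewrite negbK => /eqP ->; rewrite eqxx.
  by rewrite De.
have De' : dist (flipe e i0 j0) = n.
  by have := dist_flip e i0 j0 ne; rewrite De => -[].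
have := flip_val (flipe e i0 j0) i0 j0 (IH _ De').
rewrite (Val_eq (flipe (flipe e i0 j0) i0 j0) e) // => i j.
by rewrite /flipe; case: ifP => h; rewrite ?h ?negbK.
Qed.

Hypothesis hd : deg_bounded Q d.

Lemma main_sec :
  (Q != 0) <-> ((map_mpoly (fun z : int => z%:~R : R) Q).@[fun i => @pi_val R _ (p i) (b i)] != 0).
Proof.
split; last first.
  by apply: contraNN => /eqP ->; rewrite evQ_meval /evQ msupp0 big_nil.
move=> nQ; apply: contra nQ => /eqP V0; apply/eqP.
rewrite evQ_meval in V0.
have Vb : Val b = 0 := V0.
have Vall := all_signs Vb.
pose S i := [seq gi i (fun j => f j) | f : {ffun 'I_(klog (d i)) -> bool} <- enum {ffun 'I_(klog (d i)) -> bool}].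
apply: (@grid R q Q d S hd).
- move=> i; rewrite map_inj_uniq ?enum_uniq // => f f' /gi_inj E.
  by apply/ffunP => j; apply: E.
- move=> i; rewrite size_map -cardE card_ffun card_bool card_ord.
  exact: up_logP.
move=> x hx.
pose e i := nth [ffun => false] (enum {ffun 'I_(klog (d i)) -> bool}) (index (x i) (S i)).
rewrite (_ : evQ Q x = Val (fun i j => e i j)); first exact: Vall.
apply: evQ_eq => i.
have hi := hx i.
rewrite -{1}(nth_index 0 hi) (nth_map [ffun => false]) //.
by rewrite -(size_map (fun f : {ffun 'I_(klog (d i)) -> bool} => gi i (fun j => f j))) index_mem.
Qed.
End Main.

Theorem lemma2p1 (R : rcfType) (q : nat) (Q : {mpoly int[q]}) (d : 'I_q -> nat)
  (p : forall i : 'I_q, 'I_(klog (d i)) -> nat)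
  (b : forall i : 'I_q, 'I_(klog (d i)) -> bool) :
  deg_bounded Q d ->
  (forall i j, prime (p i j)) ->
  (forall i j i' j', p i j = p i' j' -> i = i' /\ (j : nat) = (j' : nat)) ->
  (Q != 0) <-> ((map_mpoly (fun z : int => z%:~R : R) Q).@[fun i => @pi_val R _ (p i) (b i)] != 0).
Proof.
move=> hd hpr hinj; exact: main_sec.
Qed.
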